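(* Let $q\ge2$ be an integer and $m\ge0$ an integer. Then, in base $q$, $$a_{q^m}=q^m\left(2q^{\frac{q^m-1}{q-1}}-1\right).$$ In particular, for $q=2$, $a_{2^m}=2^m\left(2^{2^m}-1\right)$.
   Context: For an integer base $q\ge2$, $s_q(m)$ denotes the sum of the base-$q$ digits of $m$, and $a_k$ denotes the smallest positive multiple of $k$ with $s_q(a_k)=k$. *)

(* Defs.v *)
From mathcomp Require Import all_boot.
Set Implicit Arguments. Unset Strict Implicit. Unset Printing Implicit Defensive.

(* Sum of base-q digits of n, computed with fuel (n itself suffices as fuel
   when q >= 2, since each step divides by q and n %/ q < n for n > 0). *)
Fixpoint digsum_aux (q fuel n : nat) : nat :=
  match fuel with
  | 0 => 0
  | f.+1 => if n is 0 then 0 else n %% q + digsum_aux q f (n %/ q)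
  end.

Definition digsum (q n : nat) : nat := digsum_aux q n n.

(* [is_a q k a] : a is the smallest positive multiple of k with s_q(a) = k,
   i.e. a = a_k in base q. *)
Definition is_a (q k a : nat) : Prop :=
  [/\ 0 < a, k %| a, digsum q a = k &
      forall b, 0 < b -> k %| b -> digsum q b = k -> a <= b].

(* Main.v *)
Require Import Defs.
From mathcomp Require Import all_boot.

Lemma aux_fuel q : 1 < q -> forall f g n, n <= f -> n <= g ->
  digsum_aux q f n = digsum_aux q g n.
Proof.
move=> hq; elim=> [|f IH] [|g] [|n] //= hf hg; congr (_ + _); apply: IH.
  by rewrite -ltnS (leq_trans _ hf) // ltn_Pdiv.
by rewrite -ltnS (leq_trans _ hg) // ltn_Pdiv.
Qed.

Lemma digsumE q n : 1 < q ->
  digsum q n = if n is 0 then 0 else n %% q + digsum q (n %/ q).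
Proof.
move=> hq; rewrite /digsum; case: n => [|n] //=; congr (_ + _).
apply: aux_fuel => //; by rewrite -ltnS ltn_Pdiv.
Qed.

Lemma digsumP q n : 1 < q -> 0 < n -> digsum q n = n %% q + digsum q (n %/ q).
Proof. by move=> hq; rewrite (digsumE _ _ hq); case: n. Qed.

Lemma digsum_mulq q c : 1 < q -> digsum q (q * c) = digsum q c.
Proof.
move=> hq; have q0 : 0 < q by apply: ltnW.
case: c => [|c]; first by rewrite muln0.
by rewrite digsumP // ?muln_gt0 ?q0 // mulKn // modnMr.
Qed.

Lemma digsum_mulX q m c : 1 < q -> digsum q (q ^ m * c) = digsum q c.
Proof.
move=> hq; elim: m => [|m IH]; first by rewrite mul1n.
by rewrite expnS -mulnA digsum_mulq.
Qed.

Lemma predS_mul s q : 0 < q -> (s.+1 * q).-1 = s * q + q.-1.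
Proof. by case: q => // q _; rewrite mulSn addSn /= addnC. Qed.

Lemma digsum_top q N : 1 < q -> digsum q (2 * q ^ N).-1 = N * q.-1 + 1.
Proof.
move=> hq; have q0 : 0 < q by apply: ltnW.
elim: N => [|N IH].
  by rewrite expn0 /= digsumP // modn_small // divn_small // (digsumE _ _ hq).
have t0 : 0 < 2 * q ^ N by rewrite muln_gt0 expn_gt0 q0.
rewrite expnS mulnCA mulnC -(prednK t0) predS_mul // digsumP //; last first.
  by rewrite addn_gt0 orbC -subn1 subn_gt0 hq.
rewrite modnMDl modn_small; last by rewrite ltn_predL.
rewrite divnMDl // divn_small ?addn0; last by rewrite ltn_predL.
by rewrite IH mulSn addnA.
Qed.

Lemma digsum_bound q N c : 1 < q -> c < (2 * q ^ N).-1 -> digsum q c <= N * q.-1.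
Proof.
move=> hq; have q0 : 0 < q by apply: ltnW.
elim: N c => [|N IH] c.
  by rewrite expn0 /=; case: c.
move=> hc; rewrite (digsumE _ _ hq); case: c hc => [|c] // hc.
set d := c.+1 in hc *.
have hmod : d %% q <= q.-1 by rewrite -ltnS prednK // ltn_mod.
have t0 : 0 < 2 * q ^ N by rewrite muln_gt0 expn_gt0 q0.
case: (ltnP (d %/ q) (2 * q ^ N).-1) => hd.
  by rewrite mulSn; apply: leq_add => //; exact: IH.
have hdq : d %/ q < 2 * q ^ N.
  rewrite ltn_divLR // -mulnA -expnSr.
  exact: leq_trans hc (leq_pred _).
have Hd : d %/ q = (2 * q ^ N).-1.
  by apply/eqP; rewrite eqn_leq hd andbT -ltnS prednK.
rewrite Hd digsum_top // mulSn addnCA [q.-1 + _]addnC leq_add2l addn1.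
have E : (2 * q ^ N.+1).-1 = (2 * q ^ N).-1 * q + q.-1.
  by rewrite expnS mulnCA mulnC -{1}(prednK t0) predS_mul.
by move: hc; rewrite {1}(divn_eq d q) Hd E ltn_add2l.
Qed.

Theorem mainTheorem15 (q m : nat) (hq : 2 <= q) :
  is_a q (q ^ m) (q ^ m * (2 * q ^ ((q ^ m - 1) %/ (q - 1)) - 1)).
Proof.
have q0 : 0 < q by apply: ltnW.
have p0 : 0 < q.-1 by rewrite -subn1 subn_gt0.
rewrite !subn1; set N := (q ^ m).-1 %/ q.-1.
have HN : N * q.-1 + 1 = q ^ m.
  rewrite /N predn_exp mulKn // mulnC -predn_exp addn1 prednK //.
  by rewrite expn_gt0 q0.
have t0 : 0 < (2 * q ^ N).-1.
  rewrite -subn1 subn_gt0 (@leq_trans 2) // -{1}(muln1 2) leq_mul2l /=.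
  by rewrite expn_gt0 q0.
split.
- by rewrite muln_gt0 expn_gt0 q0.
- exact: dvdn_mulr.
- by rewrite digsum_mulX // digsum_top.
move=> b b0 /dvdnP [c Ec] hdig; subst b.
rewrite mulnC digsum_mulX // in hdig.
rewrite mulnC leq_mul2r; apply/orP; right.
rewrite leqNgt; apply/negP => /(digsum_bound _ _ _ hq).
by rewrite hdig -HN addn1 ltnn.
Qed.
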